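(* Let $\kappa$ be a regular infinite cardinal, $I$ a nonempty set, $(S,\Sigma_S)$ a $\kappa$-measurable space separating points. For every $i\in I$ there exists a function $T_i^*:\Omega\to\Delta^\kappa(\Omega,\Sigma_\Omega)$ such that for every $\kappa$-type space $\underline M=\langle M,\Sigma,(T_i)_{i\in I},\theta\rangle$ on $S$ for player set $I$, with $\kappa$-description map $D:M\to\Omega$, and every $m\in M$, $T_i^*(D(m))(A)=T_i(m)(D^{-1}(A))$ for all $A\in\Sigma_\Omega$.
   Context: A $\kappa$-field on a nonempty set is a field closed under intersections of fewer than $\kappa$ members. $\Delta^\kappa(M,\Sigma)$ is the set of finitely additive probability measures on $(M,\Sigma)$ with the $\kappa$-field generated by the sets $\{\mu:\mu(E)\ge p\}$. ''Separating points'': for $s\neq s'$ in $S$ some $E\in\Sigma_S$ contains $s$ but not $s'$. A $\kappa$-type space on $S$ for $I$ is $\langle M,\Sigma,(T_i)_{i\in I},\theta\rangle$ with $\Sigma$ a $\kappa$-field on nonempty $M$, each $T_i:M\to\Delta^\kappa(M,\Sigma)$ measurable with: $\{m':T_i(m')=T_i(m)\}\subseteq A\in\Sigma$ implies $T_i(m)(A)=1$; and $\theta:M\to S$ measurable. $\kappa$-expressions $\Phi^\kappa$: least set containing each $E\in\Sigma_S$ and closed under $\neg$, $B_i^p$ ($i\in I$, $p\in[0,1]$), and conjunctions $\bigwedge_{\varphi\in\Psi}\varphi$ of nonempty $\Psi$ with $|\Psi|<\kappa$. Semantics: $E^{\underline M}=\theta^{-1}(E)$, complement, $(B_i^p\varphi)^{\underline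 M}=\{m:T_i(m)(\varphi^{\underline M})\ge p\}$, intersection. $D(m)=\{\varphi:m\in\varphi^{\underline M}\}$. $\Omega$ is the set of all $D(m)$ for all states of all $\kappa$-type spaces on $S$ for $I$; $[\varphi]=\{\omega\in\Omega:\varphi\in\omega\}$; $\Sigma_\Omega=\{[\varphi]:\varphi\in\Phi^\kappa\}$ (a $\kappa$-field on $\Omega$). *)

(* Defs.v *)
From Stdlib Require Import Reals.
Open Scope R_scope.

(** A cardinal kappa is represented by a type [K] of cardinality kappa.
    A subset [P] of [K] has cardinality < kappa iff [K] does not inject
    into [P]. Every set of size < kappa is (up to bijection) a subset of K,
    so families of fewer than kappa members are indexed by small [P : K -> Prop]. *)

Definition injective_fun {A B : Type} (f : A -> B) : Prop :=
  forall x y, f x = f y -> x = y.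

Definition small {K : Type} (P : K -> Prop) : Prop :=
  ~ exists g : K -> sig P, injective_fun g.

Definition infinite_card (K : Type) : Prop :=
  exists g : nat -> K, injective_fun g.

Definition regular_card (K : Type) : Prop :=
  forall (P : K -> Prop) (Q : sig P -> K -> Prop),
    small P -> (forall j, small (Q j)) ->
    small (fun k => exists j, Q j k).

Definition regular_infinite_card (K : Type) : Prop :=
  infinite_card K /\ regular_card K.

Definition kfield (K : Type) {X : Type} (F : (X -> Prop) -> Prop) : Prop :=
  F (fun _ => True) /\
  (forall A, F A -> F (fun x => ~ A x)) /\
  (forall (P : K -> Prop) (A : sig P -> X -> Prop),
      (exists k, P k) -> small P -> (forall j, F (A j)) ->
      F (fun x => forall j, A j x)).

Definition kfield_gen (K : Type) {X : Type} (G : (X -> Prop) -> Prop)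
  : (X -> Prop) -> Prop :=
  fun B => forall F, kfield K F -> (forall A, G A -> F A) -> F B.

(** * Finitely additive probability measures on (M, Sig).
    A measure is a function on subsets of M; only its values on Sig matter. *)
Definition fa_prob {M : Type} (Sig : (M -> Prop) -> Prop) (mu : (M -> Prop) -> R)
  : Prop :=
  mu (fun _ => True) = 1 /\
  (forall A, Sig A -> 0 <= mu A) /\
  (forall A B, Sig A -> Sig B -> (forall x, A x -> B x -> False) ->
     mu (fun x => A x \/ B x) = mu A + mu B).

Definition DeltaK {M : Type} (Sig : (M -> Prop) -> Prop) : Type :=
  { mu : (M -> Prop) -> R | fa_prob Sig mu }.

Definition meq {M : Type} {Sig : (M -> Prop) -> Prop} (mu nu : DeltaK Sig) : Prop :=
  forall A, Sig A -> proj1_sig mu A = proj1_sig nu A.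

Definition Delta_gens {M : Type} (Sig : (M -> Prop) -> Prop)
  : (DeltaK Sig -> Prop) -> Prop :=
  fun B => exists E p, Sig E /\ 0 <= p <= 1 /\
             B = (fun mu : DeltaK Sig => p <= proj1_sig mu E).

Definition Delta_field (K : Type) {M : Type} (Sig : (M -> Prop) -> Prop)
  : (DeltaK Sig -> Prop) -> Prop :=
  kfield_gen K (Delta_gens Sig).

Definition is_type_space (K : Type) {S I : Type} (SigS : (S -> Prop) -> Prop)
  {M : Type} (Sig : (M -> Prop) -> Prop) (T : I -> M -> DeltaK Sig)
  (theta : M -> S) : Prop :=
  inhabited M /\ kfield K Sig /\
  (forall i B, Delta_field K Sig B -> Sig (fun m => B (T i m))) /\
  (forall i m A, Sig A ->
     (forall m', meq (T i m') (T i m) -> A m') -> proj1_sig (T i m) A = 1) /\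
  (forall E, SigS E -> Sig (fun m => E (theta m))).

(** * kappa-expressions.  A conjunction over a nonempty set of fewer than
    kappa expressions is represented by a family indexed by a nonempty small
    subset of K. *)
Inductive Phi (K S I : Type) (SigS : (S -> Prop) -> Prop) : Type :=
| PAtom : { E : S -> Prop | SigS E } -> Phi K S I SigS
| PNeg : Phi K S I SigS -> Phi K S I SigS
| PBel : I -> { p : R | 0 <= p <= 1 } -> Phi K S I SigS -> Phi K S I SigS
| PConj : forall P : K -> Prop, (exists k, P k) -> small P ->
          (sig P -> Phi K S I SigS) -> Phi K S I SigS.

Arguments PAtom {K S I SigS}.
Arguments PNeg {K S I SigS}.
Arguments PBel {K S I SigS}.
Arguments PConj {K S I SigS}.

Fixpoint sem {K S I : Type} {SigS : (S -> Prop) -> Prop}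
  {M : Type} {Sig : (M -> Prop) -> Prop} (T : I -> M -> DeltaK Sig)
  (theta : M -> S) (phi : Phi K S I SigS) {struct phi} : M -> Prop :=
  match phi with
  | PAtom E => fun m => proj1_sig E (theta m)
  | PNeg psi => fun m => ~ sem T theta psi m
  | PBel i p psi => fun m => proj1_sig p <= proj1_sig (T i m) (sem T theta psi)
  | PConj _ _ _ f => fun m => forall j, sem T theta (f j) m
  end.

Definition descr (K : Type) {S I : Type} (SigS : (S -> Prop) -> Prop)
  {M : Type} {Sig : (M -> Prop) -> Prop} (T : I -> M -> DeltaK Sig)
  (theta : M -> S) (m : M) : Phi K S I SigS -> Prop :=
  fun phi => sem T theta phi m.

Definition Omega_pred (K S I : Type) (SigS : (S -> Prop) -> Prop)
  : (Phi K S I SigS -> Prop) -> Prop :=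
  fun w => exists (M : Type) (Sig : (M -> Prop) -> Prop)
             (T : I -> M -> DeltaK Sig) (theta : M -> S),
             is_type_space K SigS Sig T theta /\
             exists m, w = descr K SigS T theta m.

Definition Omega (K S I : Type) (SigS : (S -> Prop) -> Prop) : Type :=
  sig (Omega_pred K S I SigS).

Definition SigOmega (K S I : Type) (SigS : (S -> Prop) -> Prop)
  : (Omega K S I SigS -> Prop) -> Prop :=
  fun A => exists phi : Phi K S I SigS,
             A = (fun w : Omega K S I SigS => proj1_sig w phi).

Definition Dmap (K : Type) {S I : Type} (SigS : (S -> Prop) -> Prop)
  {M : Type} {Sig : (M -> Prop) -> Prop} {T : I -> M -> DeltaK Sig}
  {theta : M -> S} (H : is_type_space K SigS Sig T theta) (m : M)
  : Omega K S I SigS :=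
  exist _ (descr K SigS T theta m)
    (ex_intro _ M (ex_intro _ Sig (ex_intro _ T (ex_intro _ theta
       (conj H (ex_intro _ m eq_refl)))))).

Definition separating {S : Type} (SigS : (S -> Prop) -> Prop) : Prop :=
  forall s s', s <> s' -> exists E, SigS E /\ E s /\ ~ E s'.

(* Main.v *)
Require Import Defs.
From Stdlib Require Import Reals Lra.
From Stdlib Require Import IndefiniteDescription FunctionalExtensionality PropExtensionality Classical.
Open Scope R_scope.

Lemma sem_meas (K S I : Type) (SigS : (S -> Prop) -> Prop) (M : Type)
  (Sig : (M -> Prop) -> Prop) (T : I -> M -> DeltaK Sig) (theta : M -> S) :
  is_type_space K SigS Sig T theta -> forall phi : Phi K S I SigS, Sig (sem T theta phi).
Proof.
  intros [_ [Hk [HT [_ Hth]]]] phi.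
  destruct Hk as [HkT [HkC HkI]].
  induction phi as [E|psi IH|j p psi IH|P Pne Ps f IH]; simpl.
  - apply Hth. exact (proj2_sig E).
  - apply HkC, IH.
  - apply (HT j (fun mu => proj1_sig p <= proj1_sig mu (sem T theta psi))).
    intros F _ HG. apply HG. exists (sem T theta psi), (proj1_sig p).
    split; [exact IH|split; [exact (proj2_sig p)|reflexivity]].
  - apply (HkI P (fun j => sem T theta (f j)) Pne Ps). intro j; apply IH.
Qed.

Lemma le1 (K M : Type) (Sig : (M -> Prop) -> Prop) (mu : DeltaK Sig) A :
  kfield K Sig -> Sig A -> proj1_sig mu A <= 1.
Proof.
  intros [_ [HC _]] HA. destruct mu as [mu [H1 [H0 Hadd]]]; simpl.
  assert (E := Hadd A (fun x => ~ A x) HA (HC A HA) (fun x a na => na a)).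
  assert (Ht : (fun x => A x \/ ~ A x) = (fun _ => True)).
  { apply functional_extensionality; intro x; apply propositional_extensionality.
    split; auto. intros _; apply classic. }
  cbv beta in E. rewrite Ht, H1 in E. assert (0 <= mu (fun x => ~ A x)) by (apply H0, HC, HA). lra.
Qed.

Lemma ge0 (K M : Type) (Sig : (M -> Prop) -> Prop) (mu : DeltaK Sig) A :
  Sig A -> 0 <= proj1_sig mu A.
Proof. intros HA. destruct mu as [mu [H1 [H0 Hadd]]]; simpl. auto. Qed.

Lemma key (K S I : Type) (SigS : (S -> Prop) -> Prop) (i : I)
  (M : Type) (Sig : (M -> Prop) -> Prop) (T : I -> M -> DeltaK Sig) (theta : M -> S)
  (M0 : Type) (Sig0 : (M0 -> Prop) -> Prop) (T0 : I -> M0 -> DeltaK Sig0) (theta0 : M0 -> S)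
  (H : is_type_space K SigS Sig T theta) (H0 : is_type_space K SigS Sig0 T0 theta0)
  m m0 :
  descr K SigS T theta m = descr K SigS T0 theta0 m0 ->
  forall phi : Phi K S I SigS,
  proj1_sig (T0 i m0) (sem T0 theta0 phi) = proj1_sig (T i m) (sem T theta phi).
Proof.
  intros E phi.
  set (a := proj1_sig (T0 i m0) (sem T0 theta0 phi)).
  set (b := proj1_sig (T i m) (sem T theta phi)).
  assert (Ha0 : 0 <= a) by (apply (ge0 K), (sem_meas K S I SigS _ _ _ _ H0)).
  assert (Ha1 : a <= 1) by (apply (le1 K); [apply H0| apply (sem_meas K S I SigS _ _ _ _ H0)]).
  assert (Hb0 : 0 <= b) by (apply (ge0 K), (sem_meas K S I SigS _ _ _ _ H)).
  assert (Hb1 : b <= 1) by (apply (le1 K); [apply H| apply (sem_meas K S I SigS _ _ _ _ H)]).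
  destruct (Rtotal_order a b) as [Hlt|[Heq|Hgt]]; [|exact Heq|].
  - exfalso.
    assert (Hp : 0 <= b <= 1) by lra.
    assert (Hd : descr K SigS T theta m (PBel i (exist _ b Hp) phi)).
    { unfold descr; simpl. fold b. lra. }
    rewrite E in Hd. unfold descr in Hd; simpl in Hd. fold a in Hd. lra.
  - exfalso.
    assert (Hp : 0 <= a <= 1) by lra.
    assert (Hd : descr K SigS T0 theta0 m0 (PBel i (exist _ a Hp) phi)).
    { unfold descr; simpl. fold a. lra. }
    rewrite <- E in Hd. unfold descr in Hd; simpl in Hd. fold b in Hd. lra.
Qed.

Definition wit (K S I : Type) (SigS : (S -> Prop) -> Prop) (w : Omega K S I SigS) :
  { M : Type & { Sig : (M -> Prop) -> Prop & { T : I -> M -> DeltaK Sig &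
  { theta : M -> S & { H : is_type_space K SigS Sig T theta &
  { m : M | proj1_sig w = descr K SigS T theta m }}}}}}.
Proof.
  destruct w as [w Hw]; simpl. unfold Omega_pred in Hw.
  apply constructive_indefinite_description in Hw. destruct Hw as [M Hw].
  apply constructive_indefinite_description in Hw. destruct Hw as [Sig Hw].
  apply constructive_indefinite_description in Hw. destruct Hw as [T Hw].
  apply constructive_indefinite_description in Hw. destruct Hw as [theta [H Hw]].
  apply constructive_indefinite_description in Hw. destruct Hw as [m Hw].
  exists M, Sig, T, theta, H, m. exact Hw.
Defined.

Definition mustar (K S I : Type) (SigS : (S -> Prop) -> Prop) (i : I)
  (w : Omega K S I SigS) (A : Omega K S I SigS -> Prop) : R :=
  match wit K S I SigS w with
  | existT _ M (existT _ Sig (existT _ T (existT _ theta (existT _ H (exist _ m _))))) =>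
      proj1_sig (T i m) (fun m' => A (Dmap K SigS H m'))
  end.

Lemma mustar_fa (K S I : Type) (SigS : (S -> Prop) -> Prop) (i : I) w :
  fa_prob (SigOmega K S I SigS) (mustar K S I SigS i w).
Proof.
  unfold mustar. destruct (wit K S I SigS w) as [M [Sig [T [theta [H [m _]]]]]].
  destruct (T i m) as [mu [H1 [H0 Hadd]]] eqn:ET; simpl.
  split; [exact H1|split].
  - intros A [phi ->]. apply H0. exact (sem_meas K S I SigS _ _ _ _ H phi).
  - intros A B [phi ->] [psi ->] Hd. apply (Hadd (fun m' => sem T theta phi m')
      (fun m' => sem T theta psi m')).
    + exact (sem_meas K S I SigS _ _ _ _ H phi).
    + exact (sem_meas K S I SigS _ _ _ _ H psi).
    + intros x; exact (Hd (Dmap K SigS H x)).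
Qed.

Theorem proposition3 (K : Type) (I : Type) (S : Type)
  (SigS : (S -> Prop) -> Prop) :
  regular_infinite_card K ->
  inhabited I ->
  inhabited S -> kfield K SigS ->
  separating SigS ->
  forall i : I,
  exists Tstar : Omega K S I SigS -> DeltaK (SigOmega K S I SigS),
    forall (M : Type) (Sig : (M -> Prop) -> Prop)
           (T : I -> M -> DeltaK Sig) (theta : M -> S)
           (H : is_type_space K SigS Sig T theta) (m : M)
           (A : Omega K S I SigS -> Prop),
      SigOmega K S I SigS A ->
      proj1_sig (Tstar (Dmap K SigS H m)) A =
      proj1_sig (T i m) (fun m' => A (Dmap K SigS H m')).
Proof.
  intros _ _ _ _ _ i.
  exists (fun w => exist _ (mustar K S I SigS i w) (mustar_fa K S I SigS i w)).
  intros M Sig T theta H m A [phi ->]. simpl.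
  unfold mustar. destruct (wit K S I SigS (Dmap K SigS H m)) as [M0 [Sig0 [T0 [theta0 [H0 [m0 E]]]]]].
  simpl in E.
  exact (key K S I SigS i M Sig T theta M0 Sig0 T0 theta0 H H0 m m0 E phi).
Qed.
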